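(* Let $A\in\mathbb{R}^{n^2\times n^2}$ be PS-symmetric and define $\tilde A\in\mathbb{R}^{n^2\times n^2}$ by $\tilde A(i_2+(j_2-1)n,\,i_1+(j_1-1)n)=A(i_1+(i_2-1)n,\,j_1+(j_2-1)n)$ for $1\le i_1,i_2,j_1,j_2\le n$. Then $\tilde A$ is PS-symmetric. Consequently there exist real scalars $\lambda^{(\mathrm{sym})}_1,\dots,\lambda^{(\mathrm{sym})}_{n(n+1)/2}$, $\lambda^{(\mathrm{skew})}_1,\dots,\lambda^{(\mathrm{skew})}_{n(n-1)/2}$, symmetric matrices $B^{(\mathrm{sym})}_i\in\mathbb{R}^{n\times n}$ and skew-symmetric matrices $B^{(\mathrm{skew})}_i\in\mathbb{R}^{n\times n}$, whose vecs together form an orthonormal basis of $\mathbb{R}^{n^2}$, such that $$A=\sum_{i=1}^{n(n+1)/2}\lambda^{(\mathrm{sym})}_i\,B^{(\mathrm{sym})}_i\otimes B^{(\mathrm{sym})}_i+\sum_{i=1}^{n(n-1)/2}\lambda^{(\mathrm{skew})}_i\,B^{(\mathrm{skew})}_i\otimes B^{(\mathrm{skew})}_i.$$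
   Context: $\Pi_{nn}=I_{n^2}(:,p)$ with $p=[1{:}n{:}n^2,\;2{:}n{:}n^2,\;\dots,\;n{:}n{:}n^2]$ (MATLAB colon notation), equivalently $\Pi_{nn}(e_i\otimes e_j)=e_j\otimes e_i$ for the standard basis $e_1,\dots,e_n$ of $\mathbb{R}^n$. A matrix $M\in\mathbb{R}^{n^2\times n^2}$ is PS-symmetric if $M=M^T$ and $M=\Pi_{nn}M\Pi_{nn}$. $\otimes$ is the Kronecker product and $\mathrm{vec}$ stacks columns. *)

(* Defs.v *)
From HB Require Import structures.
From mathcomp Require Import all_boot all_order all_algebra.
Set Implicit Arguments. Unset Strict Implicit. Unset Printing Implicit Defensive.
Import Order.TTheory GRing.Theory Num.Theory.
Local Open Scope ring_scope.

(* 0-based indexing: vidx i j is the position of entry (i,j) of an n x n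
   matrix in its column-stacking vec, i.e. value i + j*n
   (the paper's 1-based  i + (j-1) n ). *)
Definition vidx (n : nat) (i j : 'I_n) : 'I_(n * n) := mxvec_index j i.

(* inverse of vidx: vsplit (vidx i j) = (i, j) *)
Definition vsplit (n : nat) (a : 'I_(n * n)) : 'I_n * 'I_n :=
  let p := enum_val (cast_ord (esym (mxvec_cast n n)) a) in (p.2, p.1).

Definition vecm (R : Type) (n : nat) (X : 'M[R]_n) : 'cV[R]_(n * n) :=
  \col_a X (vsplit a).1 (vsplit a).2.

(* Kronecker product: (B ⊗ C)(vidx q p, vidx s r) = B p r * C q s *)
Definition kron (R : pzRingType) (n : nat) (B C : 'M[R]_n) : 'M[R]_(n * n) :=
  \matrix_(a, b) (B (vsplit a).2 (vsplit b).2 * C (vsplit a).1 (vsplit b).1).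

(* the perfect shuffle Pi_nn : e_i ⊗ e_j |-> e_j ⊗ e_i, i.e. column
   vidx j i has its single 1 in row vidx i j *)
Definition Pnn (R : pzRingType) (n : nat) : 'M[R]_(n * n) :=
  \matrix_(a, b) ((a == vidx (vsplit b).2 (vsplit b).1)%:R).

Definition PS_symmetric (R : pzRingType) (n : nat) (M : 'M[R]_(n * n)) : Prop :=
  M^T = M /\ M = Pnn R n *m M *m Pnn R n.

Definition Atilde (R : Type) (n : nat) (A : 'M[R]_(n * n)) : 'M[R]_(n * n) :=
  \matrix_(a, b) A (vidx (vsplit b).1 (vsplit a).1) (vidx (vsplit b).2 (vsplit a).2).

(* Main.v *)
Require Import Defs.
From HB Require Import structures.
From mathcomp Require Import all_boot all_order all_algebra.
From mathcomp Require Import complex.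
From mathcomp Require Import ring lra zify.
Set Implicit Arguments. Unset Strict Implicit. Unset Printing Implicit Defensive.
Import Order.TTheory GRing.Theory Num.Theory.
Local Open Scope ring_scope.


Section S.
Variable R : rcfType.

Lemma real_eigen k (M : 'M[R]_k.+1) : M^T = M ->
  exists a (v : 'rV[R]_k.+1), v != 0 /\ v *m M = a *: v.
Proof.
move=> Msym.
pose Mc := map_mx (real_complex R) M.
have Mh : Mc \is hermsymmx.
  apply: realsym_hermsym.
    apply/is_hermitianmxP; rewrite expr0 scale1r map_mx_id // /Mc map_trmx Msym //.
  apply/mxOverP => i j; rewrite mxE.
  by rewrite realE (_ : 0 = 0%:C)%C // !lecR le_total.
have /hermitian_normalmx /orthomx_spectralP Me := Mh.
have dreal := hermitian_spectral_diag_real Mh.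
set P := spectralmx Mc in Me.
set d := spectral_diag Mc in Me dreal.
have Pu : P \in unitmx := spectral_unit Mc.
have PM : P *m Mc = diag_mx d *m P.
  by rewrite {1}Me !mulmxA mulmxV // mul1mx.
pose z := row 0 P.
have z0 : z != 0.
  apply/eqP => z0.
  have := mulmxV Pu; move/(congr1 (row 0)); rewrite row_mul -/z z0 mul0mx.
  move/matrixP/(_ 0 0); rewrite !mxE eqxx /=. move/eqP. by rewrite eq_sym oner_eq0.
have zM : z *m Mc = d 0 0 *: z.
  by rewrite /z -row_mul PM row_mul row_diag_mx -scalemxAl -rowE.
have dr : d 0 0 = (complex.Re (d 0 0))%:C%C.
  have := mxOverP dreal 0 0; rewrite realE !lecE /=.
  by case: (d 0 0) => x y /= /orP[] /andP[] /eqP; [move->|move<-].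
set a := complex.Re (d 0 0) in dr.
exists a.
have : \det (M - a%:M) == 0.
  have : \det (Mc - (a%:C%C)%:M) == 0.
    apply/det0P; exists z => //.
    by rewrite mulmxBr zM mul_mx_scalar dr subrr.
  by rewrite /Mc -map_scalar_mx -map_mxB det_map_mx /= (_ : 0 = 0%:C)%C // eq_complex /= eqxx andbT.
move/det0P => [v v0 vM]; exists v; split => //.
by apply/eqP; rewrite -subr_eq0 -mul_mx_scalar -mulmxBr vM.
Qed.
Lemma householder k (u : 'rV[R]_k.+1) : u *m u^T = 1%:M ->
  exists H : 'M[R]_k.+1, H *m H^T = 1%:M /\ row 0 H = u.
Proof.
move=> uu.
pose e : 'rV[R]_k.+1 := 'e_0.
pose w := u - e.
pose c := (w *m w^T) 0 0.
pose H := 1%:M - (2 / c) *: (w^T *m w).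
have HT : H^T = H.
  rewrite /H linearB /= trmx1 linearZ /= trmx_mul trmxK. reflexivity.
have ww : w *m w^T = c%:M by rewrite [LHS]mx11_scalar.
have eT : e^T = delta_mx 0 0 by rewrite /e trmx_delta.
have ce : c = 2 - (u 0 0) *+ 2.
  rewrite /c /w linearB /= mulmxBl !mulmxBr uu eT -colE /e -rowE mul_delta_mx.
  rewrite !mxE /= mulr1n; ring.
have [c0|c0] := eqVneq c 0.
  have w0 : w = 0.
    apply/rowP => j; rewrite [RHS]mxE.
    have cs : c = \sum_i w 0 i ^+ 2.
      rewrite /c !mxE; apply: eq_bigr => i _. rewrite [w^T i 0]mxE expr2 //. 
    apply/eqP; rewrite -sqrf_eq0; apply/eqP.
    by apply: (psumr_eq0P (P := predT) (F := fun i => w 0 i ^+ 2)) => //; [move=> i _; exact: sqr_ge0 | rewrite -cs].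
  exists 1%:M; split; first by rewrite trmx1 mul1mx.
  by rewrite row1; apply/eqP; rewrite eq_sym -subr_eq0 -/e -/w w0.
pose K := w^T *m w.
have KK : K *m K = c *: K.
  by rewrite /K mulmxA -(mulmxA _ w) ww mul_mx_scalar -scalemxAl.
exists H; split.
  rewrite HT /H -/K mulmxBl mul1mx mulmxBr mulmx1 -scalemxAl -scalemxAr KK scalerA.
  rewrite scalerA (_ : _ * c = 2/c + 2/c); last by field.
  by rewrite scalerDl opprB addrK subrK.
rewrite /H -/K linearB linearZ /= row1 /K row_mul [row 0 w^T]mx11_scalar mul_scalar_mx.
rewrite scalerA (_ : _ * _ = -1); last first.
  rewrite !mxE /=.
  move: c0; rewrite ce => c0.
  have h : 2 - u 0 0 *+ 2 = - (2 * (u 0 0 - 1)) by ring.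
  rewrite h in c0 *; field; move: c0; apply: contraNneq => ->; by rewrite mulr0 oppr0.
by rewrite scaleN1r opprK /w -/e addrC subrK.
Qed.

Lemma spectral k (M : 'M[R]_k) : M^T = M ->
  exists (P : 'M[R]_k) (d : 'rV[R]_k), P *m P^T = 1%:M /\ P *m M *m P^T = diag_mx d.
Proof.
elim: k M => [|k IH] M Ms.
  exists 1%:M, 0; split; first by rewrite trmx1 mul1mx.
  by rewrite [LHS]flatmx0 [RHS]flatmx0.
have [a [v [v0 vM]]] := real_eigen Ms.
pose s := (v *m v^T) 0 0.
have sE : s = \sum_j v 0 j ^+ 2.
  by rewrite /s !mxE; apply: eq_bigr => j _; rewrite mxE expr2.
have s0 : 0 < s.
  rewrite lt0r {2}sE sumr_ge0 ?andbT; last by move=> j _; exact: sqr_ge0.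
  apply: contra v0 => /eqP H; apply/eqP/rowP => j; rewrite [RHS]mxE; apply/eqP.
  rewrite -sqrf_eq0; apply/eqP; rewrite sE in H.
  exact: (@psumr_eq0P _ _ predT (fun j => v 0 j ^+ 2) (fun i _ => sqr_ge0 _) H j isT).
pose u := (Num.sqrt s)^-1 *: v.
have uu : u *m u^T = 1%:M.
  rewrite /u linearZ /= -scalemxAl -scalemxAr scalerA [v *m v^T]mx11_scalar -/s scale_scalar_mx.
  have q : Num.sqrt s ^+ 2 = s by rewrite sqr_sqrtr // ltW.
  have q0 : Num.sqrt s != 0 by rewrite sqrtr_eq0 -ltNge.
  congr (_%:M); rewrite -[X in _ * X]q; field; exact: q0.
have uM : u *m M = a *: u by rewrite /u -scalemxAl vM !scalerA mulrC.
have [H [HH Hu]] := householder uu.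
pose N : 'M[R]_(1 + k) := H *m M *m H^T.
have NT : N^T = N by rewrite /N !trmx_mul trmxK Ms mulmxA.
have Nrow : row 0 N = a *: row 0 1%:M.
  by rewrite /N !row_mul Hu uM -scalemxAl -Hu -row_mul HH.
have NE : H *m M *m H^T = N by [].
clearbody N.
have Nur : ursubmx N = 0.
  apply/matrixP => i j; move/matrixP: Nrow => /(_ 0 (rshift 1 j)).
  by rewrite !mxE (ord1 i) /= mulr0 => <-; congr (N _ _); apply: val_inj.
have Ndl : dlsubmx N = 0 by rewrite -NT -trmx_ursub Nur trmx0.
have M'T : (drsubmx N)^T = drsubmx N by rewrite trmx_drsub NT.
have [P' [d' [PP' PMP']]] := IH _ M'T.
pose B : 'M[R]_(1 + k) := block_mx 1%:M 0 0 P'.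
have BB : B *m B^T = 1%:M.
  by rewrite /B tr_block_mx mulmx_block !trmx0 trmx1 !mul0mx !mulmx0 !mul1mx !addr0 add0r PP' -scalar_mx_block.
exists (B *m H), (row_mx (ulsubmx N) d'); split.
  by rewrite trmx_mul mulmxA -(mulmxA B) HH mulmx1 BB.
rewrite trmx_mul !mulmxA.
have -> : B *m H *m M *m H^T *m B^T = B *m N *m B^T by rewrite -NE !mulmxA.
rewrite -(submxK N) Nur Ndl.
rewrite /B tr_block_mx mulmx_block !trmx0 trmx1 !mul0mx !mulmx0 !mul1mx !addr0 !add0r.
rewrite mulmx_block !mul0mx !mulmx0 !mulmx1 !addr0 !add0r PMP' block_mxKul (diag_mx_row (ulsubmx N) d').
suff -> : diag_mx (ulsubmx N) = ulsubmx N by [].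
apply/matrixP => i j; by rewrite (ord1 i) (ord1 j) !mxE eqxx mulr1n.
Qed.
End S.


Section V.
Variable n : nat.

Lemma vidxK (i j : 'I_n) : vsplit (vidx i j) = (i, j).
Proof. by rewrite /vsplit /vidx /mxvec_index cast_ordK enum_rankK. Qed.

Lemma vsplitK (a : 'I_(n * n)) : vidx (vsplit a).1 (vsplit a).2 = a.
Proof.
rewrite /vsplit /vidx /mxvec_index /=.
by rewrite -surjective_pairing enum_valK cast_ordKV.
Qed.

Definition swp (a : 'I_(n * n)) := vidx (vsplit a).2 (vsplit a).1.

Lemma swpK : involutive swp.
Proof. by move=> a; rewrite /swp vidxK /= vsplitK. Qed.

Lemma swp_vidx (i j : 'I_n) : swp (vidx i j) = vidx j i.
Proof. by rewrite /swp vidxK. Qed.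

Lemma vidx_inj (i j i' j' : 'I_n) : vidx i j = vidx i' j' -> (i, j) = (i', j').
Proof. by move/(congr1 (@vsplit n)); rewrite !vidxK. Qed.

Variable R : pzRingType.

Lemma PnnE a b : Pnn R n a b = (a == swp b)%:R.
Proof. by rewrite mxE. Qed.

Lemma mulPnnl (M : 'M[R]_(n * n)) a b : (Pnn R n *m M) a b = M (swp a) b.
Proof.
rewrite mxE (bigD1 (swp a)) //= PnnE swpK eqxx mul1r big1 ?addr0 // => x xa.
rewrite PnnE (_ : (a == swp x) = false) ?mul0r //.
by apply/negbTE; apply: contra xa => /eqP ->; rewrite swpK.
Qed.

Lemma mulPnnr (M : 'M[R]_(n * n)) a b : (M *m Pnn R n) a b = M a (swp b).
Proof.
rewrite mxE (bigD1 (swp b)) //= PnnE eqxx mulr1 big1 ?addr0 // => x xa.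
by rewrite PnnE (negbTE xa) mulr0.
Qed.

Lemma mulPnnr_gen m (M : 'M[R]_(m, n * n)) a b : (M *m Pnn R n) a b = M a (swp b).
Proof.
rewrite mxE (bigD1 (swp b)) //= PnnE eqxx mulr1 big1 ?addr0 // => x xa.
by rewrite PnnE (negbTE xa) mulr0.
Qed.

Lemma PnnT : (Pnn R n)^T = Pnn R n.
Proof.
apply/matrixP => a b; rewrite mxE !PnnE; congr (_%:R).
by rewrite eq_sym (can2_eq (@swpK) (@swpK)).
Qed.

Lemma PnnPnn : Pnn R n *m Pnn R n = 1%:M.
Proof.
apply/matrixP => a b; rewrite mulPnnl PnnE [RHS]mxE (inj_eq (can_inj (@swpK))); by case: (a == b).
Qed.

Lemma PS_symmetricP (M : 'M[R]_(n * n)) :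
  PS_symmetric M <-> M^T = M /\ forall a b, M a b = M (swp a) (swp b).
Proof.
split => -[MT MP]; split => //.
  by move=> a b; rewrite {1}MP mulPnnr mulPnnl.
by apply/matrixP => a b; rewrite mulPnnr mulPnnl MP.
Qed.

Lemma Atilde_PS (A : 'M[R]_(n * n)) : PS_symmetric A -> PS_symmetric (Atilde A).
Proof.
move=> /PS_symmetricP [AT AP]; apply/PS_symmetricP; split.
  apply/matrixP => a b; rewrite !mxE.
  by rewrite AP !swp_vidx.
move=> a b; rewrite !mxE /swp !vidxK /=.
by rewrite -{1}AT mxE.
Qed.

End V.


Section C.
Variable R : rcfType.
Variable n : nat.

Definition good s t (Us : 'M[R]_(s, n * n)) (Uk : 'M[R]_(t, n * n)) :=
  [/\ Us *m Us^T = 1%:M, Uk *m Uk^T = 1%:M, Us *m Uk^T = 0,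
      Us^T *m Us + Uk^T *m Uk = 1%:M & Us *m Pnn R n = Us /\ Uk *m Pnn R n = - Uk].

Lemma trace_Pnn : \tr (Pnn R n) = n%:R.
Proof.
rewrite /mxtrace (reindex (fun p : 'I_n * 'I_n => vidx p.1 p.2)) /=; last first.
  exists (@vsplit n) => [p _|a _]; first by rewrite vidxK -surjective_pairing.
  exact: vsplitK.
rewrite -(pair_big predT predT (fun i j => Pnn R n (vidx i j) (vidx i j))) /=.
rewrite -[n in RHS]card_ord -sumr_const; apply: eq_bigr => i _.
rewrite (bigD1 i) //= PnnE swp_vidx eqxx big1 ?addr0 // => j ji.
rewrite PnnE swp_vidx; case: eqP => // /vidx_inj [e _].
by rewrite e eqxx in ji.
Qed.

Lemma orth_full m N (Q : 'M[R]_(m, N)) : Q *m Q^T = 1%:M -> m = N -> Q^T *m Q = 1%:M.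
Proof. by move=> QQ e; subst m; apply: mulmx1C. Qed.

Lemma rowsub_mulT m1 m2 N (f : 'I_m1 -> 'I_N) (g : 'I_m2 -> 'I_N) (P : 'M[R]_N) k l :
  ((\matrix_(k, b) P (f k) b) *m (\matrix_(k, b) P (g k) b)^T) k l = (P *m P^T) (f k) (g l).
Proof. by rewrite !mxE; apply: eq_bigr => b _; rewrite !mxE. Qed.

Lemma Pnn_split : exists (Us : 'M[R]_(n * n.+1 %/ 2, n * n)) (Uk : 'M[R]_(n * n.-1 %/ 2, n * n)),
  good Us Uk.
Proof.
have [P [d [PP PPi]]] := spectral (@PnnT n R).
have PtP : P^T *m P = 1%:M by apply: mulmx1C.
have PPi' : P *m Pnn R n = diag_mx d *m P.
  by rewrite -PPi -mulmxA PtP mulmx1.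
have dsq : forall i, d 0 i ^+ 2 = 1.
  move=> i; have : diag_mx d *m diag_mx d = 1%:M.
    by rewrite -PPi !mulmxA -(mulmxA _ P^T) PtP mulmx1 -(mulmxA P) PnnPnn mulmx1.
  by move/matrixP/(_ i i); rewrite mulmx_diag !mxE eqxx mulr1n expr2.
have tr : \sum_i d 0 i = n%:R.
  by rewrite -mxtrace_diag -PPi mxtrace_mulC mulmxA PtP mul1mx trace_Pnn.
pose Sp := [set i | d 0 i == 1].
have dm : forall i, i \notin Sp -> d 0 i = -1.
  move=> i; rewrite inE; have := dsq i; move/eqP; rewrite sqrf_eq1.
  by case/orP => /eqP -> //; rewrite eqxx.
have cS : (#|Sp| = #|~: Sp| + n)%N.
  have e1 : \sum_(i in Sp) d 0 i = #|Sp|%:R.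
    by rewrite -sumr_const; apply: eq_bigr => i; rewrite inE => /eqP.
  have e2 : \sum_(i | i \notin Sp) d 0 i = - #|~: Sp|%:R.
    rewrite -sumr_const -sumrN; apply: eq_big => i; first by rewrite in_setC.
    exact: dm.
  by apply/eqP; rewrite -(eqr_nat R) natrD -tr (bigID (fun i => i \in Sp)) /= e1 e2 addrCA subrr addr0.
have cT : (#|Sp| + #|~: Sp| = n * n)%N by rewrite cardsC card_ord.
have hS : #|Sp| = (n * n.+1 %/ 2)%N.
  rewrite (_ : n * n.+1 = #|Sp| * 2)%N ?mulnK // mulnS; lia.
have hT : #|~: Sp| = (n * n.-1 %/ 2)%N.
  rewrite (_ : n * n.-1 = #|~: Sp| * 2)%N ?mulnK // -subn1 mulnBr muln1; lia.
pose f (k : 'I_(n * n.+1 %/ 2)) : 'I_(n * n) := enum_val (cast_ord (esym hS) k).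
pose g (k : 'I_(n * n.-1 %/ 2)) : 'I_(n * n) := enum_val (cast_ord (esym hT) k).
have fS : forall k, f k \in Sp by move=> k; exact: enum_valP.
have gS : forall k, g k \in ~: Sp by move=> k; exact: enum_valP.
have finj : injective f by move=> k l /enum_val_inj /cast_ord_inj.
have ginj : injective g by move=> k l /enum_val_inj /cast_ord_inj.
have PPE : forall x y, (P *m P^T) x y = (x == y)%:R by move=> x y; rewrite PP mxE.
pose Us := \matrix_(k, b) P (f k) b.
pose Uk := \matrix_(k, b) P (g k) b.
have UsUs : Us *m Us^T = 1%:M.
  by apply/matrixP => k l; rewrite rowsub_mulT PPE (inj_eq finj) mxE.
have UkUk : Uk *m Uk^T = 1%:M.
  by apply/matrixP => k l; rewrite rowsub_mulT PPE (inj_eq ginj) mxE.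
have UsUk : Us *m Uk^T = 0.
  apply/matrixP => k l; rewrite rowsub_mulT PPE mxE.
  case: eqP => // e; have := gS l; by rewrite -e in_setC fS.
have UkUs : Uk *m Us^T = 0 by rewrite -[Uk]trmxK -trmx_mul UsUk trmx0.
exists Us, Uk; split => //.
  have := @orth_full _ _ (col_mx Us Uk).
  rewrite tr_col_mx mul_col_row mul_row_col UsUs UkUk UsUk UkUs -scalar_mx_block.
  apply => //; lia.
split; apply/matrixP => k b; rewrite mulPnnr_gen !mxE.
  have := fS k; rewrite inE => /eqP dk.
  by rewrite -mulPnnr PPi' mul_diag_mx mxE dk mul1r.
have := gS k; rewrite in_setC => /dm dk.
by rewrite -mulPnnr PPi' mul_diag_mx mxE dk mulN1r.
Qed.
End C.


Section D.
Variable R : rcfType.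
Variable n : nat.

Lemma mx_eqN0 m p (X : 'M[R]_(m, p)) : X = - X -> X = 0.
Proof.
move=> h; apply/matrixP => i j; move/matrixP: h => /(_ i j); rewrite !mxE => h.
have : X i j *+ 2 == 0 by rewrite mulr2n {1}h addNr.
by rewrite mulrn_eq0 /= => /eqP.
Qed.

Lemma spectral' k (M : 'M[R]_k) : M^T = M ->
  exists (P : 'M[R]_k) (d : 'rV[R]_k), [/\ P *m P^T = 1%:M, P^T *m P = 1%:M & M = P^T *m diag_mx d *m P].
Proof.
move/spectral => [P [d [PP PM]]]; exists P, d; have PtP := mulmx1C PP; split => //.
by rewrite -PM !mulmxA PtP mul1mx -mulmxA PtP mulmx1.
Qed.

Lemma refine s t (Us : 'M[R]_(s, n * n)) (Uk : 'M[R]_(t, n * n)) (T : 'M[R]_(n * n)) :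
  good Us Uk -> T^T = T -> T = Pnn R n *m T *m Pnn R n ->
  exists (Ws : 'M[R]_(s, n * n)) (Wk : 'M[R]_(t, n * n)) (ds : 'rV[R]_s) (dk : 'rV[R]_t),
    good Ws Wk /\ T = Ws^T *m diag_mx ds *m Ws + Wk^T *m diag_mx dk *m Wk.
Proof.
case=> UsUs UkUk UsUk Ucomp [UsP UkP] TT TP.
have PUk : Pnn R n *m Uk^T = - Uk^T.
  by rewrite -[Pnn R n]PnnT -trmx_mul UkP linearN.
have cross : Us *m T *m Uk^T = 0.
  apply: mx_eqN0.
  by rewrite {1}TP !mulmxA UsP -(mulmxA (Us *m T)) PUk mulmxN.
have cross' : Uk *m T *m Us^T = 0.
  by have := congr1 trmx cross; rewrite !trmx_mul trmxK TT mulmxA trmx0.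
pose Q := col_mx Us Uk.
have QtQ : Q^T *m Q = 1%:M by rewrite /Q tr_col_mx mul_row_col.
have TE : T = Q^T *m (Q *m T *m Q^T) *m Q.
  by rewrite !mulmxA QtQ mul1mx -mulmxA QtQ mulmx1.
rewrite /Q mul_col_mx tr_col_mx mul_col_row cross cross' mul_row_block in TE.
rewrite !mulmx0 !addr0 !add0r mul_row_col in TE.
have MsT : (Us *m T *m Us^T)^T = Us *m T *m Us^T by rewrite !trmx_mul trmxK TT mulmxA.
have MkT : (Uk *m T *m Uk^T)^T = Uk *m T *m Uk^T by rewrite !trmx_mul trmxK TT mulmxA.
have [Ps [ds [PPs PtPs MsE]]] := spectral' MsT.
have [Pk [dk [PPk PtPk MkE]]] := spectral' MkT.
exists (Ps *m Us), (Pk *m Uk), ds, dk; split; last first.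
  by rewrite TE MsE MkE !trmx_mul !mulmxA.
split.
- by rewrite trmx_mul mulmxA -(mulmxA Ps) UsUs mulmx1 PPs.
- by rewrite trmx_mul mulmxA -(mulmxA Pk) UkUk mulmx1 PPk.
- by rewrite trmx_mul mulmxA -(mulmxA Ps) UsUk mulmx0 mul0mx.
- by rewrite !trmx_mul !mulmxA -(mulmxA Us^T) -(mulmxA Uk^T) PtPs PtPk !mulmx1.
- by split; rewrite -mulmxA ?UsP ?UkP ?mulmxN.
Qed.
End D.


Lemma row_dotT (R : comPzRingType) m1 m2 N (A : 'M[R]_(m1, N)) (B : 'M[R]_(m2, N)) i j :
  row i A *m (row j B)^T = ((A *m B^T) i j)%:M.
Proof.
apply/matrixP => x y; rewrite (ord1 x) (ord1 y) !mxE eqxx mulr1n.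
by apply: eq_bigr => k _; rewrite !mxE.
Qed.

Lemma sum_rowT (R : comPzRingType) m N (W : 'M[R]_(m, N)) (x : 'cV[R]_m) :
  \sum_i x i 0 *: (row i W)^T = W^T *m x.
Proof.
rewrite -[RHS]trmxK trmx_mul trmxK mulmx_sum_row linear_sum /=.
by apply: eq_bigr => i _; rewrite linearZ /= mxE.
Qed.

Lemma entry_quad (R : comPzRingType) m N (W : 'M[R]_(m, N)) (d : 'rV[R]_m) a b :
  (W^T *m diag_mx d *m W) a b = \sum_i d 0 i * (W i a * W i b).
Proof.
rewrite mul_mx_diag mxE; apply: eq_bigr => i _; rewrite !mxE.
by rewrite mulrCA mulrA.
Qed.

Unset Implicit Arguments.
Theorem mainTheorem10 (R : rcfType) (n : nat) (A : 'M[R]_(n * n)) :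
  PS_symmetric A ->
  PS_symmetric (Atilde A) /\
  exists (ls : 'I_(n * n.+1 %/ 2) -> R) (Bs : 'I_(n * n.+1 %/ 2) -> 'M[R]_n)
         (lk : 'I_(n * n.-1 %/ 2) -> R) (Bk : 'I_(n * n.-1 %/ 2) -> 'M[R]_n),
    (forall i, (Bs i)^T = Bs i) /\
        (forall i, (Bk i)^T = - Bk i) /\
        (* the vecs form an orthonormal family ... *)
        (forall i j, (vecm (Bs i))^T *m vecm (Bs j) = (i == j)%:R%:M) /\
        (forall i j, (vecm (Bk i))^T *m vecm (Bk j) = (i == j)%:R%:M) /\
        (forall i j, (vecm (Bs i))^T *m vecm (Bk j) = 0) /\
        (* ... spanning R^(n^2), i.e. an orthonormal basis *)
        (forall v : 'cV[R]_(n * n), exists (c : 'I_(n * n.+1 %/ 2) -> R)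
                                           (d : 'I_(n * n.-1 %/ 2) -> R),
            v = \sum_i c i *: vecm (Bs i) + \sum_i d i *: vecm (Bk i)) /\
        A = \sum_i ls i *: kron (Bs i) (Bs i) + \sum_i lk i *: kron (Bk i) (Bk i).
Proof.
move=> PA; have PT := Atilde_PS PA; split => //.
have [TT TP] := PT.
have [Us [Uk gU]] := Pnn_split R n.
have [Ws [Wk [ds [dk [[WW KK WK Wcomp [WP KP]] TE]]]]] := refine gU TT TP.
pose Bs i : 'M[R]_n := \matrix_(p, q) Ws i (vidx p q).
pose Bk i : 'M[R]_n := \matrix_(p, q) Wk i (vidx p q).
have vecBs : forall i, vecm (Bs i) = (row i Ws)^T.
  by move=> i; apply/matrixP => a j; rewrite !mxE vsplitK.
have vecBk : forall i, vecm (Bk i) = (row i Wk)^T.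
  by move=> i; apply/matrixP => a j; rewrite !mxE vsplitK.
exists (fun i => ds 0 i), Bs, (fun i => dk 0 i), Bk.
split.
  move=> i; apply/matrixP => p q; rewrite !mxE.
  by move/matrixP: WP => /(_ i (vidx p q)); rewrite mulPnnr_gen swp_vidx.
split.
  move=> i; apply/matrixP => p q; rewrite !mxE.
  by move/matrixP: KP => /(_ i (vidx p q)); rewrite mulPnnr_gen swp_vidx mxE.
split.
  by move=> i j; rewrite !vecBs trmxK row_dotT WW mxE.
split.
  by move=> i j; rewrite !vecBk trmxK row_dotT KK mxE.
split.
  move=> i j; rewrite vecBs vecBk trmxK row_dotT WK mxE.
  by apply/matrixP => x y; rewrite !mxE mul0rn.
split.
  move=> v; exists (fun i => (Ws *m v) i 0), (fun i => (Wk *m v) i 0).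
  rewrite (eq_bigr (fun i => (Ws *m v) i 0 *: (row i Ws)^T)); last by move=> i _; rewrite vecBs.
  rewrite [X in _ + X](eq_bigr (fun i => (Wk *m v) i 0 *: (row i Wk)^T)); last by move=> i _; rewrite vecBk.
  by rewrite !sum_rowT !mulmxA -mulmxDl Wcomp mul1mx.
apply/matrixP => x y.
pose a := vidx (vsplit x).2 (vsplit y).2.
pose b := vidx (vsplit x).1 (vsplit y).1.
have -> : A x y = Atilde A a b by rewrite mxE /a /b !vidxK /= !vsplitK.
rewrite TE [LHS]mxE !entry_quad [RHS]mxE !summxE.
by congr (_ + _); apply: eq_bigr => i _; rewrite !mxE /a /b.
Qed.
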